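(* For every integer $m\ge 0$, $\zeta^\star(\bar 1,\{1\}_m)=-\mathrm{Li}_{m+1}\!\left(\tfrac12\right)$.
   Context: For nonzero integers $s_1,\dots,s_k$, with $\operatorname{sgn}(s)=1$ if $s>0$ and $-1$ if $s<0$, the multiple zeta star value is $\zeta^\star(s_1,\dots,s_k)=\sum_{n_1\ge n_2\ge\cdots\ge n_k\ge 1}\prod_{j=1}^k n_j^{-|s_j|}\operatorname{sgn}(s_j)^{n_j}$. A barred entry $\bar p$ denotes the negative entry $-p$. The notation $\{1\}_m$ means the entry $1$ repeated $m$ times. $\mathrm{Li}_s(x)=\sum_{n\ge1}x^n/n^s$ is the polylogarithm. *)

(* Defs.v *)
From HB Require Import structures.
From mathcomp Require Import all_boot all_order all_algebra.
From mathcomp Require Import all_classical all_reals all_analysis.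
Set Implicit Arguments. Unset Strict Implicit. Unset Printing Implicit Defensive.
Import Order.TTheory GRing.Theory Num.Theory.
Local Open Scope ring_scope.

Definition sgnz {R : realType} (a : int) : R := if (0 < a)%R then 1 else -1.

(* Truncated multiple zeta star sum:
   zs_trunc [:: s1; ...; sk] N
     = sum_{N >= n1 >= n2 >= ... >= nk >= 1} prod_j sgn(s_j)^{n_j} / n_j^{|s_j|} *)
Fixpoint zs_trunc {R : realType} (s : seq int) (N : nat) : R :=
  match s with
  | [::] => 1
  | a :: s' => \sum_(1 <= n < N.+1)
                 (sgnz a ^+ n / (n%:R ^+ `|a|%N)) * zs_trunc s' n
  end.

Definition Li {R : realType} (s : nat) (x : R) : R :=
  limn (fun N : nat => \sum_(1 <= n < N) (x ^+ n / (n%:R ^+ s))).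

(* Main.v *)
Require Import Defs.
From HB Require Import structures.
From mathcomp Require Import all_boot all_order all_algebra.
From mathcomp Require Import all_classical all_reals all_analysis.
From mathcomp Require Import ring lra zify.
From Stdlib Require Import Lia.
Import Order.TTheory GRing.Theory Num.Theory.
Local Open Scope classical_set_scope.
Local Open Scope ring_scope.

Section S.
Variable R : realType.

Fixpoint H (m i n : nat) : R :=
  match m with
  | 0 => 1
  | m'.+1 => (fix Hn n := match n with 0 => 0 | n'.+1 => Hn n' + H m' i n'.+1 / (i + n'.+1)%:R end) n
  end.

Definition Hp (m i n : nat) : R := if m is m'.+1 then H m' i n else 0.

Lemma HRL m i n : H m i n.+1 = H m i n + Hp m i n.+1 / (i + n.+1)%:R.
Proof. by case: m => [|m] /=; rewrite ?mul0r ?addr0. Qed.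

Lemma HS0 m i : H m.+1 i 0 = 0. Proof. by []. Qed.

Lemma nz (k : nat) : (k.+1%:R : R) != 0.
Proof. by rewrite pnatr_eq0. Qed.

Lemma HRF m i n : H m i n.+1 = H m i.+1 n + Hp m i n.+1 / (i.+1)%:R.
Proof.
elim: m n => [|m IHm] n; first by rewrite /= mul0r addr0.
rewrite /Hp.
elim: n => [|n IHn].
  by rewrite HRL /= !add0r addn1.
rewrite HRL IHn /Hp (HRL m.+1 i.+1 n) /Hp.
have e1 := HRL m i n.+1. have e2 := IHm n.+1.
rewrite addSnnS in e1 *.
move: e1 e2; rewrite -/(Hp m i n.+2).
move: (H m i n.+2) (H m i.+1 n.+1) (H m i n.+1) (Hp m i n.+2) (H m.+1 i.+1 n) => A B X c Y e1 e2.
have h1 := nz i. have h2 := nz (i + n.+1).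
rewrite -addnS in h2 e1 *.
move: (i.+1%:R : R) ((i + n.+2)%:R : R) h1 h2 e1 e2 => a d ha hd e1 e2.
have eB : B = X + c/d - c/a by rewrite -e1 e2; ring.
rewrite eB e1.
field. by rewrite ha hd.
Qed.

Lemma HK m i n : (i + n.+1)%:R * H m i n = n%:R * H m i n.+1 + i.+1%:R * H m i.+1 n.
Proof.
have e1 := HRL m i n. have e2 := HRF m i n.
move: (H m i n.+1) (H m i n) (H m i.+1 n) (Hp m i n.+1) e1 e2 => A X B c e1 e2.
have h1 := nz i. have h2 := nz (i + n).
rewrite -addnS in h2.
have en : (i + n.+1)%:R = (i.+1)%:R + n%:R :> R by rewrite -natrD addnS addSn.
rewrite en in e1 h2 *.
move: (i.+1%:R : R) h1 h2 e1 e2 => a ha hd e1 e2.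
have eB : B = X + c/(a + n%:R) - c/a by rewrite -e1 e2; ring.
rewrite eB e1. field. by rewrite ha hd.
Qed.

Fixpoint F (i n : nat) : R := if n is n'.+1 then F i n' * (i + n)%:R else 1.

Lemma FS1 i n : F i n.+1 = i.+1%:R * F i.+1 n.
Proof.
elim: n => [|n IH]; first by rewrite /= mul1r mulr1 addn1.
have -> : F i n.+2 = F i n.+1 * (i + n.+2)%:R by [].
by rewrite IH /= -mulrA addSnnS.
Qed.

Lemma F_gt0 i n : 0 < F i n.
Proof. elim: n => [|n IH] /=; first exact: ltr01. by rewrite mulr_gt0 // ltr0n addnS. Qed.

Lemma F0 n : F 0 n = n`!%:R.
Proof. elim: n => [|n IH] //=. by rewrite IH factS natrM add0n mulrC. Qed.

Lemma H_ge0 m i n : 0 <= H m i n.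
Proof.
elim: m n => [|m IHm] n; first exact: ler01.
elim: n => [|n IHn]; first by [].
rewrite HRL /=. apply: addr_ge0 => //. by rewrite divr_ge0.
Qed.

Lemma H1 m i : H m i 1 = (i.+1%:R^-1) ^+ m.
Proof.
elim: m => [|m IH] //=. by rewrite add0r IH exprSr addn1.
Qed.

Definition b (m i j : nat) : R := j`!%:R / F i j.+1 * H m i j.+1.

Lemma b_ge0 m i j : 0 <= b m i j.
Proof. by rewrite /b mulr_ge0 ?H_ge0 // divr_ge0 // ltW // F_gt0. Qed.

Lemma brec m i j : b m i j = b m i j.+1 + b m i.+1 j.
Proof.
rewrite /b.
have K := HK m i j.+1.
have E1 : F i j.+2 = F i j.+1 * (i + j.+2)%:R by [].
have E2 := FS1 i j.+1.
rewrite factS natrM.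
have hP := F_gt0 i j.+1. have hf := F_gt0 i.+1 j.+1.
have hd := nz (i + j.+1). rewrite -addnS in hd.
have ha := nz i.
move: E1 E2 K hP hf hd ha.
move: (F i j.+2) (F i j.+1) (F i.+1 j.+1) ((i + j.+2)%:R : R) (i.+1%:R : R)
  (H m i j.+1) (H m i j.+2) (H m i.+1 j.+1) (j`!%:R : R) (j.+1%:R : R)
  => Q P f d a H1 H2 H3 u v -> E2 K hP hf hd ha.
have eP : P = a * f / d.
  by apply: (mulIf hd); rewrite E2 mulfVK.
rewrite eP.
have -> : H1 = (v * H2 + a * H3) / d by rewrite -K mulrAC mulfV // mul1r.
field. by rewrite ha hd (gt_eqF hf).
Qed.

Lemma b0j m j : b m 0 j = H m 0 j.+1 / j.+1%:R.
Proof.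
rewrite /b F0 factS natrM mulrC; congr (_ * _).
have h := nz j. have hf : (j`!%:R : R) != 0 by rewrite pnatr_eq0 -lt0n fact_gt0.
by rewrite invfM mulrCA mulfV // mulr1.
Qed.

Lemma bi0 m i : b m i 0 = (i.+1%:R^-1) ^+ m.+1.
Proof. by rewrite /b H1 /= !mul1r addn1 exprS. Qed.

Lemma sgnz1 : sgnz (1 : int) = 1 :> R.
Proof. by rewrite /sgnz ltr01. Qed.

Lemma sgnzN1 : sgnz (-1 : int) = -1 :> R.
Proof. by rewrite /sgnz. Qed.

Lemma zsH m N : zs_trunc (R:=R) (nseq m (1:int)) N = H m 0 N.
Proof.
elim: m N => [|m IH] N //=.
elim: N => [|N IHN]; first by rewrite big_geq.
rewrite big_nat_recr //= IHN IH sgnz1 expr1n expr1 mul1r mulrC.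
by rewrite HRL /Hp add0n mulrC.
Qed.

Definition Lp m N : R := \sum_(1 <= n < N) ((1/2:R)^+n / n%:R^+m.+1).

Definition G m N : R :=
  (-1)^+N / 2 * \sum_(0 <= i < N.+1) (-1/2)^+i * b m i (N - i).

Lemma sq_sign N : (-1)^+N * (-1)^+N = 1 :> R.
Proof. by rewrite -exprMn mulrNN mulr1 expr1n. Qed.

Lemma Gdiff m N : G m N.+1 = G m N + (-1)^+N.+1 * b m 0 N.+1 - (1/2)^+N.+2 * b m N.+1 0.
Proof.
rewrite /G.
set S1 := \sum_(0 <= i < N.+2) _.
set S0 := \sum_(0 <= i < N.+1) _.
set T := \sum_(0 <= i < N.+1) (-1/2)^+i * b m i.+1 (N - i).
have eq1 : S1 = S0 - T + (-1/2)^+N.+1 * b m N.+1 0.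
  rewrite /S1 big_nat_recr //= subnn; congr (_ + _).
  rewrite /S0 /T -sumrB; apply: eq_big_nat => i /andP[_ hi].
  by rewrite subSn // (brec m i (N - i)) mulrDr addrK.
have eq2 : S1 = b m 0 N.+1 + (-1/2) * T.
  rewrite /S1 big_nat_recl //= expr0 mul1r subn0; congr (_ + _).
  by rewrite /T mulr_sumr; apply: eq_bigr => i _; rewrite subSS exprS mulrA.
have eT : T = 2 * b m 0 N.+1 - 2 * S1 by rewrite eq2; field.
have eS0 : S0 = S1 + T - (-1/2)^+N.+1 * b m N.+1 0 by rewrite eq1; ring.
rewrite eS0 eT.
have hs := sq_sign N.
rewrite !exprS.
have -> : (-1/2 : R)^+N = (-1)^+N * (1/2)^+N by rewrite -exprMn mul1r.
move: ((-1 : R)^+N) ((1/2 : R)^+N) hs => s q hs.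
apply/eqP; rewrite -subr_eq0; apply/eqP.
move: (b m 0 N.+1) (b m N.+1 0) => u v.
rewrite [LHS](_ : _ = (1 - s * s) * (q * v / 4)); first by rewrite hs subrr mul0r.
by field.
Qed.

Lemma zs_top m N : zs_trunc (R:=R) ((-1 : int) :: nseq m (1:int)) N =
  \sum_(1 <= n < N.+1) ((-1)^+n / n%:R * H m 0 n).
Proof. by rewrite /=; apply: eq_bigr => n _; rewrite zsH sgnzN1 expr1. Qed.

Lemma LpS m N : Lp m N.+2 = Lp m N.+1 + (1/2)^+N.+1 / N.+1%:R^+m.+1.
Proof. by rewrite /Lp big_nat_recr. Qed.

Lemma main_id m N : zs_trunc (R:=R) ((-1 : int) :: nseq m (1:int)) N.+1 = - Lp m N.+2 - G m N.
Proof.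
elim: N => [|N IH].
  rewrite zs_top /Lp /G !big_nat1 bi0 H1 /= invr1 !expr1n.
  by field.
rewrite zs_top big_nat_recr //= -zs_top IH (LpS m N.+1).
rewrite Gdiff b0j bi0 exprVn.
rewrite (exprS _ N.+1).
move: ((-1 : R)^+N.+1) => w.
ring.
Qed.

Lemma b_decj m i j : b m i j.+1 <= b m i j.
Proof. by rewrite [X in _ <= X]brec lerDl b_ge0. Qed.

Lemma b_deci m i j : b m i.+1 j <= b m i j.
Proof. by rewrite [X in _ <= X]brec lerDr b_ge0. Qed.

Lemma b_le0 m i j : b m i j <= b m 0 j.
Proof. elim: i => [|i IH] //. exact: le_trans (b_deci _ _ _) IH. Qed.

Lemma b_le1 m i j : b m i j <= 1.
Proof.
elim: j => [|j IH]; last exact: le_trans (b_decj _ _ _) IH.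
rewrite bi0 exprn_ile1 // ?invr_ge0 ?ler0n // invf_le1 ?ltr0n // ler1n //.
Qed.

Lemma b0_anti m j d : b m 0 (j + d) <= b m 0 j.
Proof. elim: d => [|d IH]; first by rewrite addn0. rewrite addnS. exact: le_trans (b_decj _ _ _) IH. Qed.

Fixpoint P n : R := if n is n'.+1 then P n' * (2 * n'.+1%:R) / (2 * n'%:R + 1) else 1.

Lemma natS (n : nat) : (n.+1%:R : R) = n%:R + 1.
Proof. by rewrite -addn1 natrD. Qed.

Lemma PS n : P n.+1 = P n * (2 * n.+1%:R) / (2 * n%:R + 1).
Proof. by []. Qed.

Lemma P_ge1 n : 1 <= P n.
Proof.
elim: n => [|n IH] //=.
have hx : (0 : R) <= n%:R by rewrite ler0n.
rewrite natS -mulrA; apply: (le_trans IH); rewrite ler_peMr //; first lra.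
rewrite ler_pdivlMr; lra.
Qed.

Lemma HP m n : H m 0 n <= 2^+m * P n.
Proof.
elim: m n => [|m IHm] n; first by rewrite mul1r P_ge1.
elim: n => [|n IHn]; first by rewrite /= mulr1 exprn_ge0.
rewrite HRL /Hp add0n.
apply: le_trans (lerD IHn (ler_pM (H_ge0 _ _ _) _ (IHm n.+1) (lexx (n.+1%:R^-1)))) _.
  by rewrite invr_ge0 ler0n.
rewrite PS (natS n).
have hx : (0 : R) <= n%:R by rewrite ler0n.
have hP := P_ge1 n.
move: (P n) (n%:R : R) hx hP => p x hx hp.
rewrite le_eqVlt; apply/orP; left; apply/eqP.
rewrite exprS. have h1 : x + 1 != 0 by apply/negP => /eqP; lra.
have h2 : 2 * x + 1 != 0 by apply/negP => /eqP; lra.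
by field; rewrite h1 h2.
Qed.

Lemma P2 n : P n ^+ 2 <= 4 * n%:R + 1.
Proof.
elim: n => [|n IH]; first by rewrite /= expr1n mulr0 add0r.
rewrite PS (natS n).
have hx : (0 : R) <= n%:R by rewrite ler0n.
move: (P n) (n%:R : R) hx IH => p x hx IH.
have h1 : 0 < 2 * x + 1 by lra.
rewrite -mulrA exprMn.
have -> : (2 * (x + 1) / (2 * x + 1)) ^+ 2 = (2 * x + 2) ^+ 2 / (2 * x + 1) ^+ 2.
  by field; lra.
apply: le_trans (ler_wpM2r _ IH) _; first by rewrite divr_ge0 ?sqr_ge0.
rewrite mulrA ler_pdivrMr ?exprn_gt0 //.
have e : (4 * x + 1) * (2 * x + 2) ^+ 2 = (4 * (x + 1) + 1) * (2 * x + 1) ^+ 2 - 1 by ring.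
rewrite e; lra.
Qed.

Lemma b0_sq m j : b m 0 j ^+ 2 <= 5 * 4^+m / j.+1%:R.
Proof.
rewrite b0j expr_div_n.
have h := HP m j.+1. have hP := P2 j.+1. have hH := H_ge0 m 0 j.+1.
have hpos : (0:R) < j.+1%:R by rewrite ltr0n.
rewrite ler_pdivrMr ?exprn_gt0 //.
apply: le_trans (_ : (2^+m * P j.+1)^+2 <= _).
  by rewrite !expr2; apply: ler_pM.
rewrite exprMn -exprM mulnC exprM.
have -> : (2:R)^+2 = 4 by rewrite expr2; lra.
rewrite (natS j) in hP hpos *.
have hx0 : (0:R) <= j%:R by rewrite ler0n.
move: (P j.+1 ^+ 2) (j%:R : R) hP hpos hx0 => q x hq hx hx0.
rewrite expr2 mulrA -[5 * 4 ^+ m / (x + 1) * (x + 1)]mulrA mulVf ?mulr1; last by apply/negP => /eqP; lra.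
have h4 : (0:R) <= 4^+m by rewrite exprn_ge0.
rewrite (mulrC 5) -mulrA ler_wpM2l //. 
lra.
Qed.

Lemma G_bound m N : `|G m N| <= 1/2 * \sum_(0 <= i < N.+1) (1/2)^+i * b m i (N - i).
Proof.
rewrite /G normrM.
have -> : `|(-1)^+N / 2 : R| = 1/2 by rewrite normrM normr_sign mul1r normfV ger0_norm // div1r.
apply: ler_wpM2l; first lra.
apply: le_trans (ler_norm_sum _ _ _) _.
apply: ler_sum => i _.
rewrite normrM normrX (ger0_norm (b_ge0 m i (N - i))).
have -> : `|(-1/2 : R)| = 1/2 by rewrite normrM normrN normr1 normfV ger0_norm.
by [].
Qed.

Lemma geo n : \sum_(0 <= i < n) (1/2:R)^+i = 2 - 2 * (1/2)^+n.
Proof.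
elim: n => [|n IH]; first by rewrite big_geq // expr0; lra.
rewrite big_nat_recr //= IH exprS.
move: ((1/2:R)^+n) => q; lra.
Qed.

Lemma geo_le n : \sum_(0 <= i < n) (1/2:R)^+i <= 2.
Proof. rewrite geo; have : (0:R) <= (1/2)^+n by rewrite exprn_ge0 //; lra. lra. Qed.

Lemma G_cvg m : G m @ \oo --> 0.
Proof.
apply/cvgrPdist_le => e he.
set K := Num.bound (3 / e).
set J := Num.bound (5 * 4^+m * (3 / e)^+2).
exists (K + J)%N => // N /= hN.
rewrite sub0r normrN.
apply: le_trans (G_bound m N) _.
have hKN : (K <= N.+1)%N by apply: leq_trans (leq_addr J K) _; apply: leq_trans hN _.
rewrite (@big_cat_nat _ _ _ K) //=.
have h1 : \sum_(0 <= i < K) (1/2:R)^+i * b m i (N - i) <= 2 * (e/3).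
  apply: le_trans (_ : \sum_(0 <= i < K) (1/2:R)^+i * (e/3) <= _).
    apply: ler_sum_nat => i /andP[_ hi].
    apply: ler_wpM2l; first by rewrite exprn_ge0.
    apply: le_trans (b_le0 _ _ _) _.
    have hJ : (J <= N - i)%N by lia.
    rewrite -(subnKC hJ).
    apply: le_trans (b0_anti _ _ _) _.
    have hb := b0_sq m J.
    have hb0 := b_ge0 m 0 J.
    have he3 : 0 <= e/3 by lra.
    rewrite -(ler_pXn2r (n:=2)) // ?nnegrE //.
    apply: le_trans hb _.
    have hJ' := unstable.ltr_bound (5 * 4^+m * (3 / e)^+2 : R).
    rewrite -/J in hJ'.
    have hJ1 : (J%:R : R) <= J.+1%:R by rewrite ler_nat.
    have hJ2 := le_trans (ltW hJ') hJ1.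
    have hpos : (0 : R) < J.+1%:R by rewrite ltr0n.
    rewrite ler_pdivrMr //.
    have ht : 0 < 3 / e by rewrite divr_gt0.
    have -> : e / 3 = (3 / e)^-1 by rewrite invf_div.
    move: (3 / e) (5 * 4^+m : R) (J.+1%:R : R) ht hJ2 => t a y ht hJ2.
    have -> : a = (t^-1)^+2 * (a * t^+2).
      by field; apply/negP => /eqP h; rewrite h ltxx in ht.
    by apply: ler_wpM2l => //; apply: exprn_ge0; rewrite invr_ge0 ltW.
  by rewrite -mulr_suml ler_wpM2r ?geo_le //; lra.
have h2 : \sum_(K <= i < N.+1) (1/2:R)^+i * b m i (N - i) <= 2 * (1/2)^+K.
  apply: le_trans (_ : \sum_(K <= i < N.+1) (1/2:R)^+i <= _).
    apply: ler_sum_nat => i _.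
    by rewrite ler_piMr ?exprn_ge0 ?b_le1.
  rewrite -{1}(add0n K) big_addn.
  under eq_bigr do rewrite exprD.
  rewrite -mulr_suml; apply: ler_wpM2r; [by rewrite exprn_ge0 | exact: geo_le].
have h3 : (1/2:R)^+K <= e/3.
  have hK := unstable.ltr_bound (3 / e).
  rewrite -/K in hK.
  have hK2 : (K < 2^K)%N by apply: ltn_expl.
  have : (K%:R : R) < (2^K)%:R by rewrite ltr_nat.
  rewrite natrX => hK3.
  rewrite div1r exprVn.
  have h2p : (0:R) < 2^+K by rewrite exprn_gt0.
  rewrite -[e/3]invf_div lef_pV2 ?posrE ?divr_gt0 //.
  exact: ltW (lt_trans hK hK3).
lra.
Qed.

Lemma Lp_nd m : nondecreasing_seq (Lp m).
Proof.
apply/nondecreasing_seqP => n; rewrite /Lp.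
case: n => [|n]; first by rewrite big_geq // big_geq.
rewrite [X in _ <= X]big_nat_recr //= lerDl divr_ge0 ?exprn_ge0 //.
Qed.

Lemma Lp_ub m : has_ubound (range (Lp m)).
Proof.
exists 2 => _ [n _ <-].
rewrite /Lp.
case: n => [|n]; first by rewrite big_geq //; lra.
apply: le_trans (_ : \sum_(0 <= i < n.+1) (1/2:R)^+i <= 2); last exact: geo_le.
rewrite [X in _ <= X]big_nat_recl //= expr0 [X in X <= _]big_add1 /=.
apply: le_trans (_ : \sum_(0 <= i < n) (1/2:R)^+i.+1 <= _); last first.
  by rewrite lerDr.
apply: ler_sum_nat => i _.
rewrite ler_pdivrMr ?exprn_gt0 ?ltr0n // ler_peMr ?exprn_ge0 //.
by rewrite exprn_ege1 // ler1n.
Qed.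
End S.

Theorem mainTheorem2 (R : realType) (m : nat) :
  (fun N : nat => zs_trunc (R := R) ((-1 : int) :: nseq m (1 : int)) N) @ \oo
    --> - Li (m.+1) (1 / 2 : R).
Proof.
have hL := nondecreasing_cvgn (Lp_nd R m) (Lp_ub R m).
have -> : Li m.+1 (1/2 : R) = sup (range (Lp R m)).
  rewrite /Li. exact: (cvg_lim (@norm_hausdorff _ _) hL).
rewrite -[- sup _]subr0.
rewrite -(@cvg_shiftS R^o (fun N => zs_trunc (R := R) ((-1 : int) :: nseq m (1 : int)) N)).
have -> : [sequence zs_trunc (R := R) ((-1 : int) :: nseq m (1 : int)) n.+1]_n =
   (fun N => - Lp R m N.+2 - G R m N).
    by apply/funext => N; exact: main_id.
apply: cvgB; last exact: G_cvg.
apply: cvgN.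
rewrite (@cvg_shiftS R^o (fun n => Lp R m n.+1)).
by rewrite (@cvg_shiftS R^o (Lp R m)).
Qed.
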